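(* Let $K\ge1$, $g_1,\dots,g_K$ probability densities on $\mathbb{R}^d$ (finite at the data points), and $x_1,\dots,x_N\in\mathbb{R}^d$. Suppose $(\pi_1,\dots,\pi_K)$ is an optimal solution of $$\max_{\pi'}\ \sum_{n=1}^N\log\Big(\sum_{k=1}^K\pi'_k g_k(x_n)\Big)\quad\text{s.t.}\quad \pi'_1,\dots,\pi'_K\ge0,\ \sum_{k=1}^K\pi'_k=1,$$ and that $f=\sum_k\pi_kg_k$ satisfies $0<f(x_n)<\infty$ for all $n$. Then $$0\le \mathrm{MC}(\{\pi_k,g_k\}_{k=1}^K;\{x_n\}_{n=1}^N)\le\log K.$$
   Context: For mixture weights $\pi_k\ge 0$ summing to one, densities $g_k$, $f=\sum_k \pi_k g_k$, and data $x_1,\dots,x_N$ with $0<f(x_n)<\infty$ for all $n$, the mixture complexity is $$\mathrm{MC}(\{\pi_k,g_k\}_{k=1}^K;\{x_n\}_{n=1}^N)=\frac1N\sum_{n=1}^N\sum_{k=1}^K\frac{\pi_k g_k(x_n)}{f(x_n)}\log\frac{g_k(x_n)}{f(x_n)},$$ with the convention that a term with $\pi_k g_k(x_n)=0$ equals $0$. *)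

(* Defs.v *)
From mathcomp Require Import all_boot all_order all_algebra.
From mathcomp Require Import all_classical all_reals all_analysis.
Set Implicit Arguments. Unset Strict Implicit. Unset Printing Implicit Defensive.
Import Order.TTheory GRing.Theory Num.Theory.
Local Open Scope ring_scope.

Definition in_simplex (R : realType) (K : nat) (p : 'I_K -> R) : Prop :=
  (forall k, 0 <= p k) /\ \sum_(k < K) p k = 1.

Definition mixture (R : realType) (d K : nat) (p : 'I_K -> R)
  (g : 'I_K -> 'rV[R]_d -> R) (x : 'rV[R]_d) : R :=
  \sum_(k < K) p k * g k x.

Definition elog (R : realType) (y : R) : \bar R :=
  if 0 < y then (ln y)%:E else -oo%E.

Definition loglik (R : realType) (d K N : nat) (g : 'I_K -> 'rV[R]_d -> R)
  (x : 'I_N -> 'rV[R]_d) (p : 'I_K -> R) : \bar R :=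
  (\sum_(n < N) elog (mixture p g (x n)))%E.

Definition MC (R : realType) (d K N : nat) (p : 'I_K -> R)
  (g : 'I_K -> 'rV[R]_d -> R) (x : 'I_N -> 'rV[R]_d) : R :=
  N%:R^-1 * \sum_(n < N) \sum_(k < K)
     (if p k * g k (x n) == 0 then 0
      else p k * g k (x n) / mixture p g (x n) * ln (g k (x n) / mixture p g (x n))).

(* Main.v *)
Require Import Defs.
From mathcomp Require Import all_boot all_order all_algebra.
From mathcomp Require Import all_classical all_reals all_analysis.
From mathcomp Require Import ring lra.
Import Order.TTheory GRing.Theory Num.Theory.
Local Open Scope ring_scope.
Set Implicit Arguments. Unset Strict Implicit.
Section L.
Variable R : realType.

Lemma ln_le_sub1 (t : R) : 0 < t -> ln t <= t - 1.
Proof.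
move=> t0; have := expR_ge1Dx (ln t); rewrite lnK ?posrE //; lra.
Qed.

Lemma lnD3 (P G F : R) : 0 < P -> 0 < G -> 0 < F ->
  ln (P * G / F) = ln P + ln G - ln F.
Proof.
move=> P0 G0 F0.
rewrite ln_div ?posrE ?mulr_gt0 // lnM ?posrE //.
Qed.

Lemma termD (P G F : R) : 0 <= P -> 0 <= G -> 0 < F ->
  P * G / F - P <= P * G / F * ln (G / F).
Proof.
move=> P0 G0 F0.
have [->|Pn] := eqVneq P 0; first by rewrite !mul0r subr0.
have [->|Gn] := eqVneq G 0; first by rewrite mulr0 !mul0r sub0r oppr_le0.
have Pp : 0 < P by rewrite lt0r Pn.
have Gp : 0 < G by rewrite lt0r Gn.
have h := ln_le_sub1 (divr_gt0 F0 Gp).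
rewrite ln_div ?posrE // in h.
rewrite ln_div ?posrE //.
have r0 : 0 < P * G / F by rewrite divr_gt0 ?mulr_gt0.
have e : P * G / F * (F / G - 1) = P - P * G / F by field; rewrite Gn /= (gt_eqF F0).
nra.
Qed.

Lemma termA (P G F Q : R) : 0 <= P -> 0 <= G -> 0 < F -> P * G <= F ->
  (0 < P * G / F -> 0 < Q) ->
  P * G / F * ln (G / F) <= P * G / F * ln (Q / P) - P * G / F * ln Q.
Proof.
move=> P0 G0 F0 PGF hQ.
have [->|Pn] := eqVneq P 0; first by rewrite !mul0r subr0.
have [->|Gn] := eqVneq G 0; first by rewrite mulr0 !mul0r subr0.
have Pp : 0 < P by rewrite lt0r Pn.
have Gp : 0 < G by rewrite lt0r Gn.
have r0 : 0 < P * G / F by rewrite divr_gt0 ?mulr_gt0.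
have Qp := hQ r0.
have r1 : P * G / F <= 1 by rewrite ler_pdivrMr // mul1r.
have lr := ln_le0 r1.
rewrite lnD3 // in lr.
rewrite !ln_div ?posrE //.
nra.
Qed.

Lemma termB (P G F Q FQ : R) : 0 <= P -> 0 <= G -> 0 < F -> 0 <= Q -> 0 < FQ ->
  (0 < P * G / F -> 0 < Q) ->
  P * G / F * ln (Q / P) <= P * G / F * (ln FQ - ln F) + Q * G / FQ - P * G / F.
Proof.
move=> P0 G0 F0 Q0 FQ0 hQ.
have [->|Pn] := eqVneq P 0.
  by rewrite !mul0r add0r subr0 divr_ge0 ?mulr_ge0 // ltW.
have [->|Gn] := eqVneq G 0.
  by rewrite !mulr0 !mul0r add0r subr0.
have Pp : 0 < P by rewrite lt0r Pn.
have Gp : 0 < G by rewrite lt0r Gn.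
have r0 : 0 < P * G / F by rewrite divr_gt0 ?mulr_gt0.
have Qp := hQ r0.
have tp : 0 < Q * F / (P * FQ) by rewrite divr_gt0 ?mulr_gt0.
have h := ln_le_sub1 tp.
rewrite ln_div ?posrE ?mulr_gt0 // !lnM ?posrE // in h.
rewrite ln_div ?posrE //.
have e : P * G / F * (Q * F / (P * FQ) - 1) = Q * G / FQ - P * G / F.
  by field; rewrite Pn (gt_eqF F0) (gt_eqF FQ0).
nra.
Qed.

Lemma termC (Q Kr : R) : 0 <= Q -> 0 < Kr ->
  - (Q * ln Q) <= Q * ln Kr + Kr^-1 - Q.
Proof.
move=> Q0 K0.
have [->|Qn] := eqVneq Q 0.
  by rewrite !mul0r oppr0 ?mul0r add0r addr0 invr_ge0 ltW.
have Qp : 0 < Q by rewrite lt0r Qn.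
have tp : 0 < (Kr * Q)^-1 by rewrite invr_gt0 mulr_gt0.
have h := ln_le_sub1 tp.
rewrite lnV ?posrE ?mulr_gt0 // lnM ?posrE // in h.
have e : Q * ((Kr * Q)^-1 - 1) = Kr^-1 - Q.
  by field; rewrite Qn (gt_eqF K0).
nra.
Qed.
End L.
Unset Implicit Arguments. Set Strict Implicit.
Theorem proposition3 (R : realType) (d K N : nat) (hK : (1 <= K)%N) (hN : (1 <= N)%N)
  (g : 'I_K -> 'rV[R]_d -> R) (hg : forall k y, 0 <= g k y)
  (x : 'I_N -> 'rV[R]_d) (p : 'I_K -> R)
  (hp : in_simplex p)
  (hopt : forall p' : 'I_K -> R, in_simplex p' -> (loglik g x p' <= loglik g x p)%E)
  (hf : forall n, 0 < mixture p g (x n)) :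
  0 <= MC p g x /\ MC p g x <= ln K%:R.
Proof.
move: (hp) => [hp0 hp1].
pose f n := mixture p g (x n).
pose r n k := p k * g k (x n) / f n.
have hpg n k : 0 <= p k * g k (x n) by rewrite mulr_ge0.
have hrs n : \sum_(k < K) r n k = 1.
  by rewrite /r -mulr_suml /f /mixture divff // gt_eqF // hf.
have hpgf n k : p k * g k (x n) <= f n.
  by rewrite /f /mixture (bigD1 k) //= lerDl; apply: sumr_ge0.
have hr0 n k : 0 <= r n k by rewrite /r divr_ge0 //; apply/ltW/hf.
pose q k := N%:R^-1 * \sum_(n < N) r n k.
have Np : 0 < N%:R :> R by rewrite ltr0n.
have hq0 k : 0 <= q k.
  by apply: mulr_ge0; [rewrite invr_ge0 ltW // | apply: sumr_ge0 => n _; apply: hr0].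
have hqs : \sum_(k < K) q k = 1.
  rewrite /q -mulr_sumr exchange_big /= (eq_bigr (fun _ => 1)) //.
  by rewrite sumr_const card_ord mulVf // gt_eqF.
have hqpos n k : 0 < r n k -> 0 < q k.
  move=> rp; rewrite /q mulr_gt0 ?invr_gt0 //.
  by rewrite (bigD1 n) //= ltr_pwDl //; apply: sumr_ge0 => i _; apply: hr0.
have hfq n : 0 < mixture q g (x n).
  case: (pselect (exists k, 0 < p k * g k (x n))) => [[k hk]|nk]; last first.
    have : f n <= 0.
      apply: le_trans (_ : _ <= \sum_(k < K) (0:R)) _; last by rewrite big1.
      apply: ler_sum => k _.
      by rewrite leNgt; apply/negP => hk; apply: nk; exists k.
    by rewrite leNgt hf.
  have rp : 0 < r n k by rewrite /r divr_gt0 //; apply: hf.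
  have gp : 0 < g k (x n).
    by rewrite lt0r hg andbT; apply/eqP => e; move: hk; rewrite e mulr0 ltxx.
  rewrite /mixture (bigD1 k) //=; apply: ltr_pwDl.
    by apply: mulr_gt0 => //; exact: hqpos rp.
  by apply: sumr_ge0 => i _; rewrite mulr_ge0.
have hll : \sum_(n < N) ln (mixture q g (x n)) <= \sum_(n < N) ln (f n).
  have := hopt q (conj hq0 hqs); rewrite /loglik /elog.
  rewrite (eq_bigr (fun n => (ln (mixture q g (x n)))%:E)); last by move=> n _; rewrite hfq.
  rewrite [X in (_ <= X)%E](eq_bigr (fun n => (ln (f n))%:E)); last by move=> n _; rewrite hf.
  by rewrite !sumEFin lee_fin.
have hMC : MC p g x = N%:R^-1 * \sum_(n < N) \sum_(k < K) r n k * ln (g k (x n) / f n).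
  rewrite /MC; congr (_ * _); apply: eq_bigr => n _; apply: eq_bigr => k _.
  by case: eqP => [e|//]; rewrite /r e !mul0r.
rewrite hMC; split.
  apply: mulr_ge0; first by rewrite invr_ge0 ltW.
  apply: sumr_ge0 => n _.
  apply: le_trans (_ : 0 <= \sum_(k < K) (r n k - p k)) _.
    by rewrite sumrB hrs hp1 subrr.
  by apply: ler_sum => k _; apply: termD => //; apply: hf.
pose fq n := mixture q g (x n).
pose c n := ln (fq n) - ln (f n).
have Kp : 0 < K%:R :> R by rewrite ltr0n.
have step1 : \sum_(n < N) \sum_(k < K) r n k * ln (g k (x n) / f n)
   <= \sum_(n < N) \sum_(k < K) (r n k * c n + q k * g k (x n) / fq n - r n k
                                 - r n k * ln (q k)).
  apply: ler_sum => n _; apply: ler_sum => k _.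
  apply: le_trans (termA (hp0 k) (hg k (x n)) (hf n) (hpgf n k) (hqpos n k)) _.
  have := termB (hp0 k) (hg k (x n)) (hf n) (hq0 k) (hfq n) (hqpos n k).
  rewrite /r /c /fq /f; lra.
have step2 n : \sum_(k < K) (r n k * c n + q k * g k (x n) / fq n - r n k
                                 - r n k * ln (q k)) = c n - \sum_(k < K) r n k * ln (q k).
  have e1 : \sum_(k < K) r n k * c n = c n by rewrite -mulr_suml hrs mul1r.
  have e2 : \sum_(k < K) q k * g k (x n) / fq n = 1.
    by rewrite -mulr_suml /fq /mixture divff // gt_eqF // hfq.
  by rewrite !sumrB big_split /= e1 e2 hrs addrK.
have step3 : \sum_(n < N) \sum_(k < K) r n k * ln (q k)
    = N%:R * \sum_(k < K) q k * ln (q k).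
  rewrite exchange_big /= mulr_sumr; apply: eq_bigr => k _.
  by rewrite -mulr_suml /q !mulrA mulfV ?mul1r // gt_eqF.
have step4 : \sum_(k < K) - (q k * ln (q k)) <= ln K%:R.
  apply: le_trans (_ : _ <= \sum_(k < K) (q k * ln K%:R + K%:R^-1 - q k)) _.
    by apply: ler_sum => k _; apply: termC.
  have eK : K%:R^-1 *+ K = 1 :> R by rewrite -(mulr_natr (K%:R^-1)) mulVf // gt_eqF.
  rewrite !sumrB big_split /= -mulr_suml hqs sumr_const card_ord eK.
  by rewrite mul1r addrK.
have hc : \sum_(n < N) c n <= 0.
  by rewrite /c sumrB subr_le0.
have : \sum_(n < N) \sum_(k < K) r n k * ln (g k (x n) / f n) <= N%:R * ln K%:R.
  apply: le_trans step1 _.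
  rewrite (eq_bigr _ (fun n _ => step2 n)) sumrB step3.
  have : \sum_(k < K) - (q k * ln (q k)) = - \sum_(k < K) q k * ln (q k) by rewrite sumrN.
  move=> e; rewrite e in step4.
  have := ler_pM2l Np; move=> /(_ (- \sum_(k < K) q k * ln (q k)) (ln K%:R)); rewrite step4.
  move=> h; nra.
move=> h; rewrite -(ler_pM2l Np) mulrA divff ?mul1r // gt_eqF //.
Qed.
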